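(* Let $r\ge1$. For every $N\ge1$, every $k\in\mathbb{N}$ and all $d,d'\in\mathbb{Z}$, \[\frac1N\Big|\{n<N:(\Delta^{(r)}(n),\Delta^{(r)}_k(n))=(d,d')\}\Big|\le rb\;\mathbb{P}\big(\{x\in\mathbb{X}:(\Delta^{(r)}(x),\Delta^{(r)}_k(x))=(d,d')\}\big).\] In particular $\frac1N|\{n<N:\Delta^{(r)}(n)=d\}|\le rb\,\mathbb{P}(\{x\in\mathbb{X}:\Delta^{(r)}(x)=d\})$.
   Context: Fix an integer $b\ge2$. $\mathbb{X}:=\{0,\dots,b-1\}^{\mathbb{N}}$ is the space of $b$-adic integers $x=(x_k)_{k\ge0}$ (with $x_0$ the units digit), with the product topology and the addition with carries extending addition of integers: $(x+y)_0$ and carry $c_0$ are determined by $x_0+y_0$ (if $<b$, digit $x_0+y_0$ and carry $0$; else digit $x_0+y_0-b$ and carry $1$), and inductively $(x+y)_\ell$, $c_\ell$ from $x_\ell+y_\ell+c_{\ell-1}$ in the same way. $\mathbb{N}$ is embedded in $\mathbb{X}$ by identifying $n$ with its sequence of base-$b$ digits (finitely many nonzero). $T(x):=x+1$. $\mathbb{P}$ is the normalized Haar measure on $\mathbb{X}$, i.e. the product of uniform measures on $\{0,\dots,b-1\}$ (digits i.i.d. uniform). For $k\in\mathbb{N}$, $s_k(x):=x_0+\dots+x_k$ and $\Delta_k^{(r)}(x):=s_k(x+r)-s_k(x)$. For all $x$ except finitely many, $x$ and $x+r$ differ in only finitely many digits and $\Delta^{(r)}(x):=\lim_{k\to\infty}\Delta_k^{(r)}(x)$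 is defined; for $n\in\mathbb{N}$ it equals $s(n+r)-s(n)$, where $s$ is the base-$b$ sum of digits. *)

(* Defs.v *)
From HB Require Import structures.
From mathcomp Require Import all_boot all_order all_algebra.
From mathcomp Require Import all_classical all_reals all_analysis.
Set Implicit Arguments. Unset Strict Implicit. Unset Printing Implicit Defensive.
Import Order.TTheory GRing.Theory Num.Theory.

(* The base is b = c.+2 (i.e. an arbitrary integer b >= 2); a digit is an
   element of 'I_b and a b-adic integer is a digit sequence nat -> 'I_b,
   x 0 being the units digit. *)
Definition base (c : nat) : nat := c.+2.
Definition digit (c : nat) := 'I_(base c).
Definition badic (c : nat) := nat -> digit c.

HB.instance Definition _ (c : nat) := gen_eqMixin (badic c).
HB.instance Definition _ (c : nat) := gen_choiceMixin (badic c).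
HB.instance Definition _ (c : nat) := isPointed.Build (badic c) (fun _ => ord0).

Fixpoint carry (c : nat) (x y : badic c) (l : nat) : nat :=
  match l with
  | 0 => 0
  | l'.+1 => (x l' + y l' + carry x y l') %/ base c
  end.

Lemma digit_lt (c m : nat) : m %% base c < base c.
Proof. by rewrite ltn_pmod. Qed.

Definition mkdigit (c m : nat) : digit c := Ordinal (digit_lt c m).

Definition addX (c : nat) (x y : badic c) : badic c :=
  fun l => mkdigit c (x l + y l + carry x y l).

Definition natX (c : nat) (n : nat) : badic c :=
  fun k => mkdigit c (n %/ base c ^ k).

Definition sX (c : nat) (k : nat) (x : badic c) : nat :=
  (\sum_(i < k.+1) (x i : nat))%N.

Definition Delta_k (c r k : nat) (x : badic c) : int :=
  (Posz (sX k (addX x (natX c r))) - Posz (sX k x))%R.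

(* Delta^{(r)}(x) = d : the integer sequence (Delta_k^{(r)}(x))_k converges
   (i.e. is eventually constant) with limit d. *)
Definition DeltaIs (c r : nat) (x : badic c) (d : int) : Prop :=
  exists K, forall k, (K <= k)%N -> Delta_k r k x = d.

Definition cyl (c K : nat) (w : badic c) : set (badic c) :=
  [set x | forall i, (i < K)%N -> x i = w i].

Definition cylinders (c : nat) : set (set (badic c)) :=
  [set A | exists K w, A = cyl K w].

(* X with the sigma-algebra generated by the cylinders (= Borel sets of the
   product topology). *)
Definition XM (c : nat) := g_sigma_algebraType (@cylinders c).

(* Haar measure = product of uniform measures on digits: a probability measure
   on XM giving mass b^-K to every cylinder of length K (this determines it). *)
Definition is_haar (c : nat) (R : realType) (P : probability (XM c) R) : Prop :=
  forall (K : nat) (w : badic c), P (cyl K w) = (((base c)%:R : R) ^- K)%:E.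

(* Main.v *)
Require Import Defs.
From HB Require Import structures.
From mathcomp Require Import all_boot all_order all_algebra.
From mathcomp Require Import all_classical all_reals all_analysis.
From mathcomp Require Import zify.
Import Order.TTheory GRing.Theory Num.Theory.

Section Aux.
Variable c : nat.
Local Notation b := (base c).
Implicit Types x y : badic c.

Lemma b_gt1 : (1 < b)%N. Proof. by []. Qed.

Lemma carry_ext x y x' y' i : (forall j, (j < i)%N -> x j = x' j /\ y j = y' j) ->
  carry x y i = carry x' y' i.
Proof.
elim: i => [//|i IH] H /=.
have [-> ->] := H i (ltnSn i).
by rewrite IH // => j ji; apply: H; exact: ltnW.
Qed.

Lemma addX_ext x y x' y' i : (forall j, (j <= i)%N -> x j = x' j /\ y j = y' j) ->
  addX x y i = addX x' y' i.
Proof.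
move=> H; rewrite /addX.
have [-> ->] := H i (leqnn i).
by rewrite (@carry_ext x y x' y' i) // => j ji; apply: H; exact: ltnW.
Qed.

Lemma natX_val n i : (natX c n i : nat) = (n %/ b ^ i %% b)%N. Proof. by []. Qed.
Lemma natX_S n i : natX c n i.+1 = natX c (n %/ b) i.
Proof. by apply: val_inj; rewrite /= expnS divnMA. Qed.
Lemma addX_val x y i : (addX x y i : nat) = ((x i + y i + carry x y i) %% b)%N.
Proof. by []. Qed.

Lemma sum_carry x y K :
  (\sum_(j < K) x j * b ^ j + \sum_(j < K) y j * b ^ j
  = \sum_(j < K) addX x y j * b ^ j + carry x y K * b ^ K)%N.
Proof.
elim: K => [|K IH]; first by rewrite !big_ord0.
rewrite !big_ord_recr addnACA IH -!addnA; congr (_ + _) => /=.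
have hs := divn_eq (x K + y K + carry x y K) b.
have := congr1 (muln^~ (b ^ K)) hs.
rewrite expnSr.
nia.
Qed.

Lemma natX_sum K n : (n < b ^ K)%N -> (\sum_(j < K) natX c n j * b ^ j)%N = n.
Proof.
elim: K n => [|K IH] n hn.
  by rewrite big_ord0; move: hn; rewrite expn0; case: n.
rewrite big_ord_recl.
have E : forall j : 'I_K, (natX c n (lift ord0 j) * b ^ (lift ord0 j) = b * (natX c (n %/ b) j * b ^ j))%N.
  by move=> j; rewrite lift0 natX_S expnS mulnCA.
rewrite (eq_bigr _ (fun j _ => E j)).
rewrite -big_distrr /= IH; last by rewrite ltn_divLR // mulnC -expnS.
rewrite expn0 divn1 muln1; have := divn_eq n b; lia.
Qed.

Lemma natX_inj L n m : (n < b ^ L)%N -> (m < b ^ L)%N ->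
  (forall i, (i < L)%N -> natX c n i = natX c m i) -> n = m.
Proof.
move=> hn hm H; rewrite -(@natX_sum L n hn) -(@natX_sum L m hm).
by apply: eq_bigr => i _; rewrite H.
Qed.


Lemma natX_zero r j : (r < b ^ j)%N -> (natX c r j : nat) = 0%N.
Proof. by move=> h; rewrite natX_val divn_small. Qed.

Lemma step0 x y j : carry x y j = 0%N -> (y j : nat) = 0%N ->
  carry x y j.+1 = 0%N /\ addX x y j = x j.
Proof.
move=> hc hy; split.
  by rewrite /= hc hy !addn0 divn_small.
by apply: val_inj; rewrite /= hc hy !addn0 modn_small.
Qed.

Lemma tailX x y L : (forall j, (L <= j)%N -> (y j : nat) = 0%N) -> carry x y L = 0%N ->
  forall j, (L <= j)%N -> addX x y j = x j.
Proof.
move=> hy hc.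
have H : forall m, carry x y (L + m) = 0%N.
  elim=> [|m IH]; first by rewrite addn0.
  by rewrite addnS; case: (@step0 x y _ IH (hy _ (leq_addr _ _))).
move=> j hj; rewrite -(subnKC hj).
by case: (@step0 x y _ (H (j - L)%N) (hy _ (leq_addr _ _))).
Qed.

Lemma carry_L0 r L n x : (n + r < b ^ L)%N -> (forall j, (j < L)%N -> x j = natX c n j) ->
  carry x (natX c r) L = 0%N.
Proof.
move=> h hx.
have := sum_carry x (natX c r) L.
rewrite (eq_bigr (fun j : 'I_L => natX c n j * b ^ j)%N); last by move=> j _; rewrite hx.
rewrite !natX_sum; try lia.
nia.
Qed.

Lemma Dk_inv r L x x' : (forall j, (j < L)%N -> x j = x' j) -> (r < b ^ L)%N ->
  carry x (natX c r) L = 0%N -> carry x' (natX c r) L = 0%N ->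
  forall k, Delta_k r k x = Delta_k r k x'.
Proof.
move=> hxx hr hc hc' k.
have hy : forall j, (L <= j)%N -> (natX c r j : nat) = 0%N.
  move=> j hj; apply: natX_zero; apply: (leq_trans hr); exact: leq_pexp2l.
have T := @tailX x _ L hy hc; have T' := @tailX x' _ L hy hc'.
have low : forall j, (j < L)%N -> addX x (natX c r) j = addX x' (natX c r) j.
  move=> j hj; apply: addX_ext => i hi; split=> //; apply: hxx; exact: leq_ltn_trans hj.
rewrite /Delta_k /sX.
set A := (\sum_(i < k.+1) _)%N; set B := (\sum_(i < k.+1) _)%N.
set A' := (\sum_(i < k.+1) _)%N; set B' := (\sum_(i < k.+1) _)%N.
have H : (A + B' = A' + B)%N.
  rewrite /A /B /A' /B' -!big_split; apply: eq_bigr => j _.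
  case: (ltnP j L) => hj.
    by rewrite low // hxx.
  by rewrite T // T' //= addnC.
lia.
Qed.

End Aux.

Section Meas.
Variable c : nat.
Local Notation b := (base c).
Local Open Scope classical_set_scope.

Lemma prefix K : forall x : badic c, exists m, forall i, (i < K)%N -> x i = natX c m i.
Proof.
elim: K => [|K IH] x; first by exists 0%N.
have [m hm] := IH (fun i => x i.+1).
exists (x 0%N + b * m)%N => -[_|i hi].
  apply: val_inj; rewrite /= expn0 divn1 addnC mulnC modnMDl modn_small //.
rewrite natX_S.
have -> : ((x 0%N + b * m) %/ b)%N = m.
  by rewrite addnC mulnC divnMDl // divn_small ?addn0 // ltn_ord.
exact: hm.
Qed.

Lemma cyl_meas K w : measurable (cyl K w : set (XM c)).
Proof. by apply: sub_sigma_algebra; exists K, w. Qed.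

Lemma meas_det K (A : set (XM c)) :
  (forall x x' : badic c, (forall i, (i < K)%N -> x i = x' i) -> A x -> A x') -> measurable A.
Proof.
move=> H.
have -> : A = \bigcup_(m in [set m | A (natX c m)]) (cyl K (natX c m) : set (XM c)).
  apply/seteqP; split.
  - move=> x Ax; have [m hm] := prefix K x; exists m => //=; exact: (H x).
  - move=> x [m /= Am hx]; apply: (H (natX c m)) => // i hi; exact: esym (hx i hi).
by apply: bigcup_measurable => m _; exact: cyl_meas.
Qed.

Lemma Dk_local r k (x x' : badic c) : (forall i, (i < k.+1)%N -> x i = x' i) ->
  Delta_k r k x = Delta_k r k x'.
Proof.
move=> H; rewrite /Delta_k /sX; congr (Posz _ - Posz _)%R; apply: eq_bigr => i _.
  congr nat_of_ord; apply: addX_ext => j hj; split=> //; apply: H.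
  exact: leq_ltn_trans hj (ltn_ord i).
by rewrite H.
Qed.

Lemma meas_Dk r k v : measurable [set x : XM c | Delta_k r k x = v].
Proof.
apply: (@meas_det k.+1) => x x' h /= <-; by rewrite (@Dk_local r k x x' h).
Qed.

Lemma meas_DeltaIs r d : measurable [set x : XM c | DeltaIs r x d].
Proof.
have -> : [set x : XM c | DeltaIs r x d] = \bigcup_(K in setT)
   \bigcap_(k in [set k | (K <= k)%N]) [set x : XM c | Delta_k r k x = d].
  apply/seteqP; split => x /=.
  - by move=> [K hK]; exists K => // k hk; exact: hK.
  - by move=> [K _ hK]; exists K => k hk; exact: hK.
apply: bigcup_measurable => K _; apply: bigcap_measurable.
  by exists K => /=.
by move=> k _; exact: meas_Dk.
Qed.

End Meas.

Section Count.
Variables (c : nat) (R : realType) (P : probability (XM c) R).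
Hypothesis HP : is_haar P.
Local Notation b := (base c).
Local Open Scope classical_set_scope.
Local Open Scope ring_scope.

Lemma count_bound (Q : badic c -> Prop) N L :
  measurable [set x : XM c | Q x] -> (N <= b ^ L)%N ->
  (forall n, (n < N)%N -> Q (natX c n) -> forall x, cyl L (natX c n) x -> Q x) ->
  ((#|[set n : 'I_N | `[< Q (natX c n) >]]|%:R * ((b%:R : R) ^- L))%:E
     <= P [set x : XM c | Q x])%E.
Proof.
move=> mA hN Hinv.
pose F := fun i : 'I_N => (cyl L (natX c i) : set (XM c)).
pose p := fun i : 'I_N => `[< Q (natX c i) >].
have hU : (\big[setU/set0]_(i < N | p i) F i) `<=` [set x : XM c | Q x].
  apply: (big_ind (fun S => S `<=` [set x : XM c | Q x])).
  - by [].
  - by move=> S T hS hT x [/hS|/hT].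
  - move=> i /asboolP pi x hx; exact: (Hinv i (ltn_ord i) pi x hx).
have mU : measurable (\big[setU/set0]_(i < N | p i) F i).
  by apply: bigsetU_measurable => i _; exact: cyl_meas.
have := le_measure P _ _ hU.
rewrite !inE => /(_ mU mA).
apply: le_trans.
rewrite measure_bigsetU_ord_cond.
- have -> : (\sum_(i < N | p i) P (F i) =
      (\sum_(i in [set n : 'I_N | p n]) ((b%:R : R) ^- L))%:E)%E.
    rewrite -sumEFin; apply: eq_big => i.
      by apply/idP/idP => h; [apply: mem_set | exact: (set_mem h)].
    by move=> _; exact: HP.
  rewrite sumr_const -(mulr_natl ((b%:R : R) ^- L)).
  exact: le_refl.
- by move=> i _; exact: cyl_meas.
- move=> i j _ _ [x [hi hj]]; apply: val_inj.
  apply: (@natX_inj c L).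
  + exact: leq_trans (ltn_ord i) hN.
  + exact: leq_trans (ltn_ord j) hN.
  + by move=> k hk; rewrite -(hi k hk) -(hj k hk).
Qed.

Lemma final (Q : badic c -> Prop) r N : (1 <= r)%N -> (1 <= N)%N ->
  measurable [set x : XM c | Q x] ->
  (forall L n, (n + r < b ^ L)%N -> Q (natX c n) -> forall x, cyl L (natX c n) x -> Q x) ->
  ((#|[set n : 'I_N | `[< Q (natX c n) >]]|%:R / N%:R : R)%:E
     <= ((r * b)%:R : R)%:E * P [set x : XM c | Q x])%E.
Proof.
move=> hr hN mA Hinv.
set m := (N.-1 + r)%N.
have hm : (0 < m)%N by rewrite /m; lia.
set L := (trunc_log b m).+1.
have hL1 : (m < b ^ L)%N by apply: trunc_log_ltn.
have hL2 : (b ^ L <= b * m)%N by rewrite /L expnS leq_mul2l trunc_logP ?orbT.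
have h1 : (m <= r * N)%N by rewrite /m; nia.
have h2 : (b * m <= b * (r * N))%N by rewrite leq_mul2l h1 orbT.
have hNL : (N <= b ^ L)%N by rewrite /m in hL1; lia.
have hinv : forall n, (n < N)%N -> Q (natX c n) -> forall x, cyl L (natX c n) x -> Q x.
  by move=> n hn; apply: Hinv; rewrite /m in hL1; lia.
have H := @count_bound Q N L mA hNL hinv.
have hB : ((b ^ L)%:R : R) <= (r * b)%:R * N%:R.
  by rewrite -natrM ler_nat; lia.
have P0 : (0 <= P [set x : XM c | Q x])%E by exact: measure_ge0.
have P1 : (P [set x : XM c | Q x] <= 1)%E by exact: probability_le1.
have fP : P [set x : XM c | Q x] \is a fin_num.
  by rewrite ge0_fin_numE // (le_lt_trans P1) // ltry.
rewrite -(fineK fP) in H *.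
set p := fine _ in H *.
have p0 : 0 <= p by rewrite -lee_fin (fineK fP).
rewrite -EFinM lee_fin.
move: H; rewrite lee_fin -natrX.
set S := (#|_|%:R : R); set B := ((b ^ L)%:R : R) => H.
have B0 : 0 < B by rewrite ltr0n expn_gt0.
have N0 : 0 < (N%:R : R) by rewrite ltr0n.
rewrite ler_pdivrMr //.
have SE : S = (S * B^-1) * B by rewrite -mulrA mulVf ?mulr1 // gt_eqF.
rewrite SE.
apply: (le_trans (ler_wpM2r (ltW B0) H)).
by rewrite mulrAC [p * B]mulrC; apply: ler_wpM2r.
Qed.
End Count.

Lemma inv_all c r L n (x : badic c) : (n + r < base c ^ L)%N -> cyl L (natX c n) x ->
  forall k, Delta_k r k x = Delta_k r k (natX c n).
Proof.
move=> h hx; apply: (@Dk_inv c r L x (natX c n)).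
- exact: hx.
- lia.
- exact: (@carry_L0 c r L n x h hx).
- exact: (@carry_L0 c r L n (natX c n) h (fun j _ => erefl)).
Qed.

Local Open Scope ring_scope.
Local Open Scope classical_set_scope.

Theorem mainTheorem4 (c : nat) (R : realType) (P : probability (XM c) R)
  (HP : is_haar P) (r : nat) (hr : (1 <= r)%N) :
  (forall (N : nat) (k : nat) (d d' : int), (1 <= N)%N ->
     ((#|[set n : 'I_N | `[< DeltaIs r (natX c n) d /\
                            Delta_k r k (natX c n) = d' >]]|%:R / N%:R : R)%:E
     <= ((r * base c)%:R : R)%:E *
        P [set x : XM c | DeltaIs r x d /\ Delta_k r k x = d'])%E) /\
  (forall (N : nat) (d : int), (1 <= N)%N ->
     ((#|[set n : 'I_N | `[< DeltaIs r (natX c n) d >]]|%:R / N%:R : R)%:E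
     <= ((r * base c)%:R : R)%:E * P [set x : XM c | DeltaIs r x d])%E).
Proof.
split.
- move=> N k d d' hN.
  apply: (@final c R P HP (fun x => DeltaIs r x d /\ Delta_k r k x = d') r N hr hN).
    exact: (measurableI _ _ (meas_DeltaIs c r d) (meas_Dk c r k d')).
  move=> L n h [[K hK] hk] x hx.
  have E := @inv_all c r L n x h hx.
  split; last by rewrite E.
  by exists K => j hj; rewrite E; exact: hK.
- move=> N d hN.
  apply: (@final c R P HP (fun x => DeltaIs r x d) r N hr hN).
    exact: meas_DeltaIs.
  move=> L n h [K hK] x hx.
  have E := @inv_all c r L n x h hx.
  by exists K => j hj; rewrite E; exact: hK.
Qed.
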